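(* Let $G$ be a finite group and $O=C_1\sqcup\dots\sqcup C_m$ a disjoint union of conjugacy classes of $G$, none equal to $\{1\}$, such that the elements of each class $C_i$ generate $G$. Then the power series $\chi_{(G,O)}(t_1,\dots,t_m)=\sum_{\bar k\in\mathbb Z_{\ge0}^m}h_{\bar k}t_1^{k_1}\cdots t_m^{k_m}$ is a rational function, where $h_{\bar k}$ is the number of elements $s\in S(G,O)^G_{\mathbf 1}$ with $\tau(s)=\bar k$.
   Context: The factorization semigroup $S(G,O)$ is generated by symbols $x_g$, $g\in O$, subject to $x_{g_1}x_{g_2}=x_{g_2}x_{g_2^{-1}g_1g_2}=x_{g_1g_2g_1^{-1}}x_{g_1}$ ($g_1,g_2\in O$); $\alpha_G:S(G,O)\to G$, $x_g\mapsto g$. For $s=x_{g_1}\cdots x_{g_n}$, $G_s$ is the subgroup generated by $g_1,\dots,g_n$ (well defined). $S(G,O)^G_{\mathbf 1}=\{s:G_s=G,\ \alpha_G(s)=1\}$. The type is $\tau(s)=(\tau_1(s),\dots,\tau_m(s))$, where $\tau_i(s)$ is the number of factors $x_g$ of $s$ with $g\in C_i$. *)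

(* Defs.v *)
From mathcomp Require Import all_boot all_order all_algebra all_fingroup.
From mathcomp.multinomials Require Import mpoly.
Set Implicit Arguments. Unset Strict Implicit. Unset Printing Implicit Defensive.
Import GRing.Theory.

(* Words of length n over gT; a word x_{g_1}...x_{g_n} is the tuple (g_1,...,g_n). *)
Section Hurwitz.
Variable gT : finGroupType.
Variable n : nat.

(* One elementary move of the defining relation at positions i, i+1:
   (a, b) |-> (b, b^-1 a b)   (note: a ^ b = b^-1 * a * b in mathcomp). *)
Definition hmove (s t : n.-tuple gT) : bool :=
  [exists i : 'I_n,
     (i.+1 < n) &&
     [forall j : 'I_n,
        if j == i :> nat then tnth t j == nth 1%g s i.+1
        else if j == i.+1 :> nat then tnth t j == (nth 1%g s i ^ nth 1%g s i.+1)%g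
        else tnth t j == tnth s j]].

Definition hequiv : rel (n.-tuple gT) := connect (fun s t => hmove s t || hmove t s).

End Hurwitz.

(* h_k: number of elements s of S(G,O)^G_1 with type k, where O = \bigcup_i C i.
   Elements of S(G,O) of length n = sum_i k_i are equivalence classes of words
   with letters in O under hequiv. *)
Definition hcount (gT : finGroupType) (G : {group gT}) (m : nat)
    (C : 'I_m -> {set gT}) (k : 'X_{1..m}) : nat :=
  let n := mdeg k in
  let O := \bigcup_(i < m) C i in
  #|[set [set u | hequiv t u] |
       t in [set t : n.-tuple gT |
               [&& all (fun g => g \in O) t,
                   <<[set g in t]>>%g == G :> {set gT},
                   (\prod_(g <- t) g)%g == 1%g &
                   [forall i : 'I_m, count (fun g => g \in C i) t == k i]]]]|.

(* A power series F (given by its coefficients) in m variables with rational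
   coefficients is a rational function: Q * F = P for polynomials P, Q with Q <> 0. *)
Definition rational_series (m : nat) (F : 'X_{1..m} -> rat) : Prop :=
  exists P Q : {mpoly rat[m]}, (Q != 0)%R /\
    forall k : 'X_{1..m},
      (\sum_(e <- msupp Q | (e <= k)%MM) Q@_e * F (k - e)%MM = P@_k)%R.

(* Main.v *)
From Stdlib Require Import Classical FunctionalExtensionality.
Require Import Defs.
From mathcomp Require Import all_boot all_order all_algebra all_fingroup all_solvable.
From mathcomp Require Import zify lra.
From mathcomp.multinomials Require Import mpoly.
Set Implicit Arguments. Unset Strict Implicit. Unset Printing Implicit Defensive.

Definition upd (x : nat -> nat) (d y : nat) : nat -> nat :=
  fun i => if i == d then y else x i.
Definition downset (d : nat) (P : (nat -> nat) -> Prop) :=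
  forall a b, (forall i, i < d -> a i <= b i) -> P b -> P a.

Lemma fin_bound (Y : nat) (Q : nat -> nat -> Prop) :
  (forall y, y <= Y -> exists N, forall n, N <= n -> Q y n) ->
  exists N, forall y n, y <= Y -> N <= n -> Q y n.
Proof.
elim: Y => [|Y IH] H.
  have [N HN] := H 0 (leqnn 0).
  by exists N => y n; rewrite leqn0 => /eqP ->; apply: HN.
have [N1 HN1] := IH (fun y hy => H y (leqW hy)).
have [N2 HN2] := H Y.+1 (leqnn _).
exists (maxn N1 N2) => y n hy hn.
rewrite leq_eqVlt in hy; case/orP: hy => [/eqP ->|hy].
  by apply: HN2; apply: leq_trans hn; apply: leq_maxr.
by apply: HN1 => //; apply: leq_trans hn; apply: leq_maxl.
Qed.

Lemma chain_le (D : nat -> (nat -> nat) -> Prop) :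
  (forall n a, D n.+1 a -> D n a) -> forall n n' a, n <= n' -> D n' a -> D n a.
Proof.
move=> HD n n' a /subnK <-; elim: (n' - n) => // k IH.
by rewrite addSn => /HD.
Qed.

Lemma upd_le x d y y' : y <= y' -> forall i, i < d.+1 -> upd x d y i <= upd x d y' i.
Proof. by move=> hy i _; rewrite /upd; case: eqP. Qed.

Lemma upd_mono a b d y : (forall i, i < d -> a i <= b i) ->
  forall i, i < d.+1 -> upd a d y i <= upd b d y i.
Proof.
move=> hab i hi; rewrite /upd; case: eqP => // /eqP hne.
by apply: hab; rewrite ltn_neqAle hne -ltnS.
Qed.

Lemma upd_id a d : upd a d (a d) = a.
Proof. by apply: functional_extensionality => i; rewrite /upd; case: eqP => // ->. Qed.

Lemma dcc d (D : nat -> (nat -> nat) -> Prop) :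
  (forall n, downset d (D n)) -> (forall n a, D n.+1 a -> D n a) ->
  exists n0, forall n a, n0 <= n -> (D n a <-> D n0 a).
Proof.
elim: d D => [|d IH] D Hd Hdec.
  case: (classic (exists n, ~ D n (fun _ => 0))) => [[n0 Hn0]|Hall].
    exists n0 => n a hn; split => [Ha|Ha].
      by apply: chain_le hn Ha.
    by exfalso; apply: Hn0; apply: (Hd n0 _ a).
  exists 0 => n a _; split => _.
    apply: (Hd 0 _ (fun _ => 0)) => //.
    by apply: NNPP => H; apply: Hall; exists 0.
  apply: (Hd n _ (fun _ => 0)) => //.
  by apply: NNPP => H; apply: Hall; exists n.
pose S n y x := D n (upd x d y).
have HSd n y : downset d (S n y).
  by move=> a b hab; apply: Hd; apply: upd_mono.
have HSy n y y' x : y <= y' -> S n y' x -> S n y x.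
  by move=> hy; apply: Hd; apply: upd_le.
have HSn n y x : S n.+1 y x -> S n y x by apply: Hdec.
pose E y x := forall n, S n y x.
have HE y : exists N, forall n, N <= n -> forall x, S n y x <-> E y x.
  have [ny Hny] := IH (fun n => S n y) (fun n => HSd n y) (fun n => HSn n y).
  exists ny => n hn x; split => [Hs n'|He]; last exact: He.
  have Hs' : S ny y x by apply/(Hny n x hn).
  case: (leqP n' ny) => hn'.
    exact: (chain_le (fun n a => HSn n y a) hn' Hs').
  by apply/(Hny n' x (ltnW hn')).
have HEd y : downset d (E y) by move=> a b hab Hb n; apply: (HSd n y a b hab).
have HEy y x : E y.+1 x -> E y x by move=> H n; apply: (HSy n y y.+1).
have [ys Hys] := IH E HEd HEy.
have [N0 HN0] := @fin_bound ys (fun y n => forall x, S n y x <-> E y x) (fun y _ => HE y).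
have key n a : N0 <= n ->
   (D n a <-> if a d <= ys then E (a d) a else E ys a).
  move=> hn; have -> : D n a <-> S n (a d) a by rewrite /S upd_id.
  case: leqP => had; first exact: HN0.
  split => [Hs|He].
    by apply/(HN0 ys n (leqnn _) hn); apply: (HSy n ys (a d)) => //; apply: ltnW.
  by have := proj2 (Hys (a d) a (ltnW had)) He; apply.
exists N0 => n a hn.
rewrite (key n a hn) (key N0 a (leqnn _)).
by [].
Qed.

Definition mn (a : nat -> nat) L := fun i => minn (a i) L.

Lemma box_mono (Q : (nat -> nat) -> Prop) L L' :
  (forall a, Q a <-> Q (mn a L)) -> L <= L' -> forall a, Q a <-> Q (mn a L').
Proof.
move=> H hL a; rewrite (H a) (H (mn a L')).
have -> : mn (mn a L') L = mn a L; last by [].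
apply: functional_extensionality => i; rewrite /mn -minnA.
by rewrite (minn_idPr hL).
Qed.

Lemma box d P : downset d P -> exists L, forall a, P a <-> P (mn a L).
Proof.
elim: d P => [|d IH] P HP.
  by exists 0 => a; split; apply: HP.
pose S y x := P (upd x d y).
have HSd y : downset d (S y) by move=> a b hab; apply: HP; apply: upd_mono.
have HSy y x : S y.+1 x -> S y x by apply: HP; apply: upd_le.
have [y0 Hy0] := dcc HSd HSy.
have HL y : y <= y0 -> exists N, forall n, N <= n -> forall x, S y x <-> S y (mn x n).
  move=> _; have [Ly HLy] := IH (S y) (HSd y).
  by exists Ly => n hn; apply: box_mono HLy hn.
have [L1 HL1] := @fin_bound y0 (fun y n => forall x, S y x <-> S y (mn x n)) HL.
exists (maxn L1 y0) => a.
have E1 b : P b <-> S (b d) b by rewrite /S upd_id.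
rewrite (E1 a) (E1 (mn a (maxn L1 y0))).
case: (leqP (a d) y0) => had.
  have -> : mn a (maxn L1 y0) d = a d.
    by rewrite /mn; apply/minn_idPl; apply: leq_trans had (leq_maxr _ _).
  by apply: HL1 => //; apply: leq_maxl.
have hge : y0 <= mn a (maxn L1 y0) d.
  by rewrite /mn leq_min (ltnW had) leq_maxr.
rewrite (Hy0 (a d) a (ltnW had)) (Hy0 _ _ hge).
by apply: HL1 => //; apply: leq_maxl.
Qed.

Lemma box_fun d (g : (nat -> nat) -> nat) :
  (forall a b, (forall i, i < d -> a i <= b i) -> g b <= g a) ->
  exists L, forall a, g a = g (mn a L).
Proof.
move=> Hg; pose M := g (fun _ => 0).
have HM a : g a <= M by apply: Hg.
have HL c : c <= M -> exists N, forall n, N <= n -> forall a, c <= g a <-> c <= g (mn a n).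
  move=> _; have [L HL] := box (P := fun a => c <= g a)
     (fun a b hab hb => leq_trans hb (Hg a b hab)).
  by exists L => n hn; apply: box_mono HL hn.
have [L HL'] := @fin_bound M (fun c n => forall a, c <= g a <-> c <= g (mn a n)) HL.
exists L => a; apply/eqP; rewrite eqn_leq.
apply/andP; split.
  by apply/(HL' (g a) L (HM a) (leqnn _) a).
by apply/(HL' _ L (HM _) (leqnn _) a).
Qed.

Open Scope group_scope.

Section Seq.
Variable gT : finGroupType.
Implicit Types s t : seq gT.

Definition smove s t := exists p a b q,
  s = p ++ a :: b :: q /\ t = p ++ b :: (a ^ b) :: q.

Inductive sequiv : seq gT -> seq gT -> Prop :=
| sq_refl s : sequiv s s
| sq_step s t : smove s t -> sequiv s t
| sq_sym s t : sequiv s t -> sequiv t s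
| sq_trans s t u : sequiv s t -> sequiv t u -> sequiv s u.

Lemma smove_swap p a b q : sequiv (p ++ a :: b :: q) (p ++ b :: (a ^ b) :: q).
Proof. by apply: sq_step; exists p, a, b, q. Qed.

Lemma sequiv_cat p q s t : sequiv s t -> sequiv (p ++ s ++ q) (p ++ t ++ q).
Proof.
elim=> {s t} [s|s t [p' [a [b [q' [-> ->]]]]]|s t _ IH|s t u _ IH1 _ IH2].
- exact: sq_refl.
- by rewrite -!catA /= !catA; apply: smove_swap.
- exact: sq_sym.
- exact: sq_trans IH1 IH2.
Qed.

Lemma sequiv_consl x s t : sequiv s t -> sequiv (x :: s) (x :: t).
Proof. by move=> /(sequiv_cat [:: x] [::]); rewrite !cats0. Qed.

Lemma sequiv_catl p s t : sequiv s t -> sequiv (p ++ s) (p ++ t).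
Proof. by move=> /(sequiv_cat p [::]); rewrite !cats0. Qed.

Lemma sequiv_catr q s t : sequiv s t -> sequiv (s ++ q) (t ++ q).
Proof. by move=> /(sequiv_cat [::] q). Qed.

Lemma sequiv_invP (P : seq gT -> bool) (X : Type) (f : seq gT -> X) :
  (forall p a b q, P (p ++ a :: b :: q) = P (p ++ b :: (a ^ b) :: q)) ->
  (forall p a b q, P (p ++ a :: b :: q) ->
      f (p ++ a :: b :: q) = f (p ++ b :: (a ^ b) :: q)) ->
  forall s t, sequiv s t -> P s = P t /\ (P s -> f s = f t).
Proof.
move=> HP Hf s t; elim=> {s t} [s|s t [p [a [b [q [-> ->]]]]]|s t _ [IH1 IH2]|s t u _ [IH1 IH2] _ [IH3 IH4]].
- by [].
- by split; [apply: HP| apply: Hf].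
- split => [|Ht]; first by rewrite IH1.
  by rewrite IH2 // IH1.
- split; first by rewrite IH1.
  by move=> Hs; rewrite IH2 // IH4 // -IH1.
Qed.

Lemma sequiv_inv (X : Type) (f : seq gT -> X) :
  (forall p a b q, f (p ++ a :: b :: q) = f (p ++ b :: (a ^ b) :: q)) ->
  forall s t, sequiv s t -> f s = f t.
Proof.
move=> Hf s t H.
by have [_ ->] := @sequiv_invP (fun _ => true) X f (fun _ _ _ _ => erefl) (fun p a b q _ => Hf p a b q) s t H.
Qed.

Definition sprod s := \prod_(g <- s) g.

Lemma sprod_inv s t : sequiv s t -> sprod s = sprod t.
Proof.
apply: sequiv_inv => p a b q; rewrite /sprod !big_cat !big_cons; congr (_ * _).
move: (\big[_/_]_(j <- q) j) => x.
by rewrite /= conjgE !mulgA mulgV mul1g.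
Qed.

Lemma size_inv s t : sequiv s t -> size s = size t.
Proof. by apply: sequiv_inv => p a b q; rewrite !size_cat. Qed.

Lemma gen_inv s t : sequiv s t -> <<[set x in s]>> = <<[set x in t]>>.
Proof.
apply: (@sequiv_inv _ (fun s => <<[set x in s]>>)) => p a b q.
have sub (A B : {set gT}) : A \subset <<B>> -> <<A>> \subset <<B>> by rewrite gen_subG.
apply/eqP; rewrite eqEsubset; apply/andP; split; apply: sub; apply/subsetP => x;
  rewrite inE !mem_cat !inE; case/orP=> [H|/orP[/eqP->|/orP[/eqP->|H]]].
- by apply: mem_gen; rewrite inE mem_cat H.
- suff : (a ^ b) ^ b^-1 \in <<[set y in p ++ [:: b, a ^ b & q]]>> by rewrite conjgK.
  apply: groupJ; [|rewrite groupV]; apply: mem_gen; rewrite inE mem_cat.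
    by rewrite in_cons mem_head !orbT.
  by rewrite mem_head orbT.
- by apply: mem_gen; rewrite inE mem_cat mem_head orbT.
- by apply: mem_gen; rewrite inE mem_cat !in_cons H !orbT.
- by apply: mem_gen; rewrite inE mem_cat H.
- by apply: mem_gen; rewrite inE mem_cat in_cons mem_head !orbT.
- apply: groupJ; apply: mem_gen; rewrite inE mem_cat.
    by rewrite mem_head orbT.
  by rewrite in_cons mem_head !orbT.
- by apply: mem_gen; rewrite inE mem_cat !in_cons H !orbT.
Qed.

Lemma move_left w b r : sequiv (w ++ b :: r) (b :: map (conjg^~ b) w ++ r).
Proof.
elim: w => [|x w IH] /=; first exact: sq_refl.
apply: sq_trans (sequiv_consl x IH) _.
exact: (smove_swap [::]).
Qed.

Lemma move_right a w r : sequiv (a :: w ++ r) (w ++ (a ^ sprod w) :: r).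
Proof.
elim: w a => [|x w IH] a /=; first by rewrite /sprod big_nil conjg1; apply: sq_refl.
apply: sq_trans (smove_swap [::] a x (w ++ r)) _ => /=.
apply: sq_trans (sequiv_consl x (IH (a ^ x))) _.
by rewrite /sprod big_cons conjgM; apply: sq_refl.
Qed.

Lemma collect g s M : M <= count_mem g s -> exists s', sequiv s (nseq M g ++ s').
Proof.
elim: s M => [|x s IH] M /=.
  by rewrite leqn0 => /eqP ->; exists [::]; apply: sq_refl.
case: eqP => [->|hne] hM.
  case: M hM => [|M] hM; first by exists (g :: s); apply: sq_refl.
  have [s' Hs'] := IH M hM.
  by exists s'; apply: sequiv_consl.
have [s' Hs'] := IH M hM.
exists ((x ^ sprod (nseq M g)) :: s').
apply: sq_trans (sequiv_consl x Hs') _.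
exact: move_right.
Qed.

Lemma rot1_equiv a w : sprod (a :: w) = 1 -> sequiv (a :: w) (w ++ [:: a]).
Proof.
move=> H; have := move_right a w [::]; rewrite cats0.
have -> : sprod w = a^-1.
  by move: H; rewrite /sprod big_cons => /eqP; rewrite mulg_eq1 => /eqP ->; rewrite invgK.
by rewrite conjgE invgK mulgV mulg1.
Qed.

Lemma rot_equiv u v : sprod (u ++ v) = 1 -> sequiv (u ++ v) (v ++ u).
Proof.
elim: u v => [|x u IH] v H /=; first by rewrite cats0; apply: sq_refl.
have H1 := rot1_equiv H.
refine (sq_trans H1 _).
rewrite -catA; apply: sq_trans (IH _ _) _.
  by move: (sprod_inv H1); rewrite -catA => <-.
by rewrite -catA; apply: sq_refl.
Qed.

Lemma conjg_self (x : gT) : x ^ x = x.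
Proof. by rewrite conjgE mulKg. Qed.

Lemma conj_last w b : sprod (w ++ [:: b]) = 1 ->
  sequiv (w ++ [:: b]) (map (conjg^~ b) (w ++ [:: b])).
Proof.
move=> H; have H1 := move_left w b [::]; rewrite cats0 in H1.
refine (sq_trans H1 _).
rewrite map_cat /= conjg_self; apply: rot1_equiv.
by rewrite -(sprod_inv H1).
Qed.

Lemma conj_letter s a : sprod s = 1 -> a \in s -> sequiv s (map (conjg^~ a) s).
Proof.
move=> H Ha; case/splitPr: Ha H => p q H.
have E1 : sequiv ((p ++ [:: a]) ++ q) (q ++ (p ++ [:: a])).
  by apply: rot_equiv; rewrite -catA.
rewrite -cat_rcons -cats1.
refine (sq_trans E1 _).
rewrite catA; have E2 := conj_last (w:=q ++ p) (b:=a).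
have H2 : sprod ((q ++ p) ++ [:: a]) = 1.
  by rewrite -catA -(sprod_inv E1) -catA.
apply: sq_trans (E2 H2) _.
have H3 := sprod_inv (E2 H2); rewrite H2 !map_cat -!catA in H3.
rewrite !map_cat -!catA [in X in sequiv _ X]catA.
by apply: rot_equiv; rewrite -H3.
Qed.

Lemma map_conjM0 : True. Proof. by []. Qed.
Lemma map_conjM s x y : map (conjg^~ y) (map (conjg^~ x) s) = map (conjg^~ (x * y)) s.
Proof. by rewrite -map_comp; apply: eq_map => z /=; rewrite conjgM. Qed.

Lemma conj_gen s h : sprod s = 1 -> h \in <<[set x in s]>> ->
  sequiv s (map (conjg^~ h) s).
Proof.
move=> H /gen_prodgP [n [c Hc ->]].
elim: n c Hc => [|n IH] c Hc.
  by rewrite big_ord0 (eq_map (fun z => conjg1 z)) map_id; apply: sq_refl.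
rewrite big_ord_recl /=.
set h0 := \prod_(i < n) c (lift ord0 i).
have E := IH (fun i => c (lift ord0 i)) (fun i => Hc _).
rewrite -/h0 in E.
set a := c ord0.
have Ha : a \in s by move: (Hc ord0); rewrite inE.
have H1 : sprod (map (conjg^~ h0) s) = 1 by rewrite -(sprod_inv E).
have E2 := conj_letter H1 (map_f (conjg^~ h0) Ha).
refine (sq_trans E _); refine (sq_trans E2 _).
rewrite map_conjM.
have -> : h0 * a ^ h0 = a * h0.
  by rewrite conjgE mulgA mulgV mul1g.
exact: sq_refl.
Qed.
End Seq.

Section Tup.
Variable gT : finGroupType.

Lemma nth_splice (s : seq gT) i b c j : i.+1 < size s ->
  nth 1 (take i s ++ b :: c :: drop i.+2 s) j =
  if j == i then b else if j == i.+1 then c else nth 1 s j.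
Proof.
move=> hi; have hi' : i < size s by apply: ltnW.
rewrite nth_cat size_take hi'.
case: ltnP => hj.
  rewrite nth_take //.
  have -> : (j == i) = false by apply/eqP; lia.
  have -> : (j == i.+1) = false by apply/eqP; lia.
  by [].
have [->|hji] := eqVneq j i; first by rewrite subnn.
have [->|hji1] := eqVneq j i.+1; first by rewrite subSnn.
have -> : j - i = (j - i.+2).+2 by lia.
by rewrite /= nth_drop; congr nth; lia.
Qed.

Lemma splice_id (s : seq gT) i : i.+1 < size s ->
  take i s ++ nth 1 s i :: nth 1 s i.+1 :: drop i.+2 s = s.
Proof.
move=> hi; apply: (@eq_from_nth _ 1).
  rewrite size_cat /= size_take size_drop (ltnW hi); lia.
move=> j _; rewrite nth_splice //.
by case: eqP => [->|_] //; case: eqP => [->|].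
Qed.

Lemma hmove_smove n (t u : n.-tuple gT) : hmove t u -> smove t u.
Proof.
case/existsP => i /andP [hi /forallP H].
have hs : i.+1 < size t by rewrite size_tuple.
exists (take i t), (nth 1 t i), (nth 1 t i.+1), (drop i.+2 t); split.
  by rewrite splice_id.
apply: (@eq_from_nth _ 1).
  by rewrite size_cat /= size_take size_drop (ltnW hs) !size_tuple; lia.
move=> j; rewrite size_tuple => hj.
rewrite nth_splice //.
have := H (Ordinal hj); rewrite !(tnth_nth 1) /=.
by case: eqP => _; [move/eqP|case: eqP => _ /eqP].
Qed.

Lemma smove_hmove n (t u : n.-tuple gT) : smove t u -> hmove t u.
Proof.
case=> p [a [b [q [Ht Hu]]]].
have Hn : ((size p).+2 + size q)%N = n.
  by rewrite -(size_tuple t) Ht size_cat /=; lia.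
have hi : size p < n by rewrite -Hn; lia.
apply/existsP; exists (Ordinal hi); rewrite /=.
apply/andP; split; first by rewrite -Hn; lia.
have hs : (size p).+1 < size t by rewrite size_tuple -Hn; lia.
have Ep : p = take (size p) t by rewrite Ht take_size_cat.
have Eq : q = drop (size p).+2 t.
  by rewrite Ht -(addn2 (size p)) addnC -drop_drop drop_size_cat //= drop0.
have Ea : a = nth 1 t (size p) by rewrite Ht nth_cat ltnn subnn.
have Eb : b = nth 1 t (size p).+1 by rewrite Ht nth_cat ltnNge leqnSn /= subSnn.
have Hu' : tval u = take (size p) t ++ nth 1 t (size p).+1 :: (nth 1 t (size p) ^ nth 1 t (size p).+1) :: drop (size p).+2 t.
  by rewrite -Ea -Eb -Eq -Ep.
apply/forallP => j; rewrite !(tnth_nth 1) Hu' nth_splice //.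
by case: eqP => //; case: eqP.
Qed.

Lemma hequiv_sequiv n (t u : n.-tuple gT) : hequiv t u -> sequiv t u.
Proof.
case/connectP => p; elim: p t => [|v p IH] t /=.
  by move=> _ ->; apply: sq_refl.
case/andP => /orP [H|H] Hp Hl.
  exact: sq_trans (sq_step (hmove_smove H)) (IH v Hp Hl).
exact: sq_trans (sq_sym (sq_step (hmove_smove H))) (IH v Hp Hl).
Qed.

Lemma sequiv_hequiv n (t u : n.-tuple gT) : sequiv t u -> hequiv t u.
Proof.
move=> H.
suff: forall s1 s2, sequiv s1 s2 -> forall t1 t2 : n.-tuple gT,
    tval t1 = s1 -> tval t2 = s2 -> hequiv t1 t2 by move/(_ _ _ H t u); apply.
move=> {H t u} s1 s2; elim=> {s1 s2} [s|s t Hst|s t _ IH|s t w Hst IH1 _ IH2] t1 t2 E1 E2.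
- by rewrite (val_inj (etrans E1 (esym E2))); apply: connect0.
- by apply: connect1; rewrite smove_hmove // E1 E2.
- have Hs : connect_sym (fun s t : n.-tuple gT => hmove s t || hmove t s).
    by apply: sym_connect_sym => x y; rewrite orbC.
  by rewrite /hequiv Hs; apply: IH.
- have hs : size t == n by rewrite -(size_inv Hst) -E1 size_tuple.
  exact: connect_trans (IH1 t1 (Tuple hs) E1 erefl) (IH2 (Tuple hs) t2 erefl E2).
Qed.
End Tup.

Close Scope group_scope.

Lemma sprod_nseq (gT : finGroupType) n (x : gT) : sprod (nseq n x) = (x ^+ n)%g.
Proof. by elim: n => [|n IH]; rewrite /sprod ?big_nil // big_cons -/(sprod _) IH expgS. Qed.

Lemma count_set_sum (gT : finType) (C : {set gT}) (s : seq gT) :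
  count (fun g => g \in C) s = (\sum_(x in C) count_mem x s)%N.
Proof.
elim: s => [|y s IH] /=; first by rewrite big1.
rewrite (eq_bigr (fun x => (y == x) + count_mem x s)%N); last first.
  by move=> x _ /=; rewrite eq_sym.
rewrite IH.
rewrite big_split /=; congr addn.
case: (boolP (y \in C)) => hy.
  rewrite (bigD1 y) //= eqxx big1 // => x /andP [_ hx].
  by rewrite eq_sym (negbTE hx).
by rewrite big1 // => x hx; case: eqP => // E; rewrite E hx in hy.
Qed.

Lemma pigeon (gT : finType) (C : {set gT}) (s : seq gT) N :
  #|C| * N < count (fun g => g \in C) s -> exists2 x, x \in C & N < count_mem x s.
Proof.
move=> H; apply: NNPP => Hn; move: H; rewrite count_set_sum ltnNge; apply/negP/negPn.
rewrite -sum_nat_const; apply: leq_sum => x hx.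
by rewrite leqNgt; apply/negP => hl; apply: Hn; exists x.
Qed.

Section Mono.
Variables (gT : finGroupType) (G : {group gT}) (m : nat) (C : 'I_m -> {set gT}).
Hypothesis hC : forall i, C i \in classes G.
Hypothesis hdisj : injective C.

Let O := \bigcup_(i < m) C i.

Lemma C_class i : exists2 x, x \in G & C i = (x ^: G)%g.
Proof. by have /imsetP [x hx ->] := hC i; exists x. Qed.

Lemma C_sub i y : y \in C i -> y \in G.
Proof. by have [x hx ->] := C_class i => /imsetP [z hz ->]; apply: groupJ. Qed.

Lemma C_conj i y h : h \in G -> ((y ^ h)%g \in C i) = (y \in C i).
Proof.
have [x hx ->] := C_class i => hh; apply/idP/idP.
  by move=> /imsetP [z hz E]; apply/imsetP; exists (z * h^-1)%g; rewrite ?groupM ?groupV // conjgM -E conjgK.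
by move=> /imsetP [z hz ->]; apply/imsetP; exists (z * h)%g; rewrite ?groupM // conjgM.
Qed.

Lemma O_sub y : y \in O -> y \in G.
Proof. by case/bigcupP => i _; apply: C_sub. Qed.

Lemma O_conj y h : h \in G -> ((y ^ h)%g \in O) = (y \in O).
Proof.
move=> hh; apply/bigcupP/bigcupP => [[i _ hi]|[i _ hi]]; exists i => //.
  by rewrite -(C_conj i y hh).
by rewrite C_conj.
Qed.

Definition valid (k : 'X_{1..m}) (s : seq gT) :=
  [&& all (fun g => g \in O) s,
      <<[set g in s]>>%g == G :> {set gT},
      (\prod_(g <- s) g)%g == 1%g &
      [forall i : 'I_m, count (fun g => g \in C i) s == k i]].

Definition cvec (s : seq gT) := [ffun i : 'I_m => count (fun g => g \in C i) s].

Lemma allO_inv s t : sequiv s t -> all (fun g => g \in O) s = all (fun g => g \in O) t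
   /\ (all (fun g => g \in O) s -> cvec s = cvec t).
Proof.
apply: sequiv_invP => p a b q.
  rewrite !all_cat /=; congr (_ && _).
  case: (boolP (b \in O)) => hb /=; last by rewrite !andbF.
  by rewrite O_conj ?(O_sub hb) // andbCA.
rewrite all_cat /= => /and4P [_ _ hb _].
apply/ffunP => i; rewrite !ffunE !count_cat /=.
by rewrite C_conj ?(O_sub hb) //; lia.
Qed.

Definition kplus (k : 'X_{1..m}) (j : 'I_m) (N : nat) : 'X_{1..m} :=
  [multinom (if i == j then (k i + N)%N else k i) | i < m].

Variable gsel : 'I_m -> gT.
Hypothesis gsel_in : forall j, gsel j \in C j.

Lemma mono_step (k : 'X_{1..m}) j (s' : seq gT) : (#|G| * #|G| <= k j)%N ->
  valid (kplus k j #|G|) s' ->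
  exists2 s, valid k s & sequiv s' (nseq #|G| (gsel j) ++ s).
Proof.
set N := #|G|; move=> hk /and4P [hO /eqP hgen /eqP hprod /forallP hcnt].
have hcj : (#|C j| * N < count (fun g => g \in C j) s')%N.
  move: (hcnt j); rewrite mnmE eqxx => /eqP ->.
  have hCj : #|C j| <= N by apply: subset_leq_card; apply/subsetP => y; apply: C_sub.
  have : 0 < N by apply: cardG_gt0.
  have := leq_mul hCj (leqnn N); lia.
have [g hg hgc] := pigeon hcj.
have [s1 Hs1] := collect hgc.
set w := nseq N g ++ g :: s1.
have Ew : nseq N.+1 g ++ s1 = w by rewrite /w -addn1 nseqD -catA.
rewrite Ew in Hs1.
have Pw : sprod w = 1%g by rewrite -(sprod_inv Hs1).
have Gw : <<[set x in w]>>%g = G by rewrite -(gen_inv Hs1).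
have [x hx ECj] := C_class j.
have : g \in C j by [].
rewrite ECj => /imsetP [y1 hy1 Eg].
have := gsel_in j; rewrite ECj => /imsetP [y2 hy2 Egs].
set h := (y1^-1 * y2)%g.
have hG : h \in G by rewrite groupM ?groupV.
have hh : (g ^ h)%g = gsel j by rewrite Eg Egs /h -conjgM mulgA mulgV mul1g.
have hw : h \in <<[set x in w]>>%g by rewrite Gw.
have E2 := conj_gen Pw hw.
set s := map (conjg^~ h) (g :: s1).
have Ews : map (conjg^~ h) w = nseq N (gsel j) ++ s by rewrite map_cat map_nseq hh.
rewrite Ews in E2.
have HW := sq_trans Hs1 E2.
exists s; last by [].
have [EO Ec] := allO_inv HW.
have gs : gsel j \in s by rewrite /s /= hh mem_head.
apply/and4P; split.
- by move: hO; rewrite EO all_cat => /andP [].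
- apply/eqP; rewrite -hgen (gen_inv HW); congr (<< _ >>)%g.
  apply/setP => z; rewrite !in_set mem_cat mem_nseq.
  by case: (boolP (z == gsel j)) => [/eqP ->|_]; rewrite ?gs ?andbF ?orbT.
- have Hn := sprod_nseq N (gsel j); rewrite /sprod in Hn.
  have := sprod_inv HW; rewrite {1}/sprod hprod /sprod big_cat /= Hn.
  by rewrite expg_cardG ?(C_sub (gsel_in j)) // mul1g => <-.
- apply/forallP => i; have := congr1 (fun f : {ffun 'I_m -> nat} => f i) (Ec hO).
  rewrite !ffunE count_cat count_nseq /= => Hc.
  move: (hcnt i); rewrite mnmE Hc => /eqP.
  have -> : (gsel j \in C i) = (i == j).
    apply/idP/eqP => [hi|->]; last exact: gsel_in.
    apply: hdisj; have [xi hxi ECi] := C_class i.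
    rewrite ECi ECj; rewrite ECi in hi.
    have := gsel_in j; rewrite ECj => hj.
    by rewrite -(class_eqP hi) (class_eqP hj).
  by case: eqP => _ /=; rewrite ?mul1n ?mul0n ?add0n => E; apply/eqP; lia.
Qed.

Lemma mdeg_kplus k j N : mdeg (kplus k j N) = (mdeg k + N)%N.
Proof.
rewrite !mdegE (eq_bigr (fun i => k i + (if i == j then N else 0))%N); last first.
  by move=> i _; rewrite mnmE; case: eqP; rewrite ?addn0.
by rewrite big_split /= -big_mkcond /= big_pred1_eq.

Qed.

Lemma hcountE k : hcount G C k =
  #|[set [set u | hequiv t u] | t in [set t : (mdeg k).-tuple gT | valid k t]]|.
Proof. by []. Qed.

Lemma cls_eq n (t u : n.-tuple gT) : hequiv t u ->
  [set w | hequiv t w] = [set w | hequiv u w].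
Proof.
have Hs : connect_sym (fun s t : n.-tuple gT => hmove s t || hmove t s).
  by apply: sym_connect_sym => x y; rewrite orbC.
move=> H; apply/setP => w; rewrite !inE; apply/idP/idP => Hw.
  by apply: connect_trans Hw; rewrite /hequiv Hs.
exact: connect_trans H Hw.
Qed.

Lemma hcount_mono (k : 'X_{1..m}) j : (#|G| * #|G| <= k j)%N ->
  (hcount G C (kplus k j #|G|) <= hcount G C k)%N.
Proof.
move=> hk; rewrite !hcountE.
set N := #|G|; set n := mdeg k; set n' := mdeg (kplus k j N).
have Hn' : n' = (N + n)%N by rewrite /n' mdeg_kplus addnC.
set cls := fun n0 (t : n0.-tuple gT) => [set u | hequiv t u].
set V := [set t : n.-tuple gT | valid k t].
set V' := [set t : n'.-tuple gT | valid (kplus k j N) t].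
pose t0 := nseq_tuple n (1%g : gT); pose t0' := nseq_tuple n' (1%g : gT).
pose F := fun S : {set n.-tuple gT} =>
  cls n' (insubd t0' (nseq N (gsel j) ++ tval (odflt t0 [pick x in S]))).
apply: (@leq_trans #|F @: (cls n @: V)|); last exact: leq_imset_card.
apply: subset_leq_card; apply/subsetP => X /imsetP [t' ht' ->].
rewrite inE in ht'.
have [s hs Es] := mono_step hk ht'.
have hsz : size s == n.
  by have := size_inv Es; rewrite size_tuple size_cat size_nseq Hn' => /eqP; rewrite eqn_add2l eq_sym.
pose tt := Tuple hsz.
apply/imsetP; exists (cls n tt); first by apply/imsetP; exists tt; rewrite ?inE.
rewrite /F; case: pickP => [u hu|none]; last first.
  by have := none tt; rewrite /cls inE /hequiv connect0.
rewrite /cls inE in hu; have Hsu := hequiv_sequiv hu.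
apply: cls_eq; apply: sequiv_hequiv.
rewrite val_insubd size_cat size_nseq size_tuple -Hn' eqxx /=.
apply: sq_trans Es _; apply: sequiv_catl; exact: Hsu.
Qed.
End Mono.

Section Period.
Variables (m : nat) (h : 'X_{1..m} -> nat) (N B : nat).
Hypothesis N_gt0 : 0 < N.
Hypothesis hmono : forall (k : 'X_{1..m}) j, B <= k j -> h (kplus k j N) <= h k.

Definition phi (p : {ffun 'I_m -> 'I_(B + N)}) (a : nat -> nat) : 'X_{1..m} :=
  [multinom (if p i < B then nat_of_ord (p i) else p i + N * a i) | i < m].

Lemma phi_step p a (r : 'I_m) : h (phi p (upd a r (a r).+1)) <= h (phi p a).
Proof.
case: (ltnP (p r) B) => hpr.
  have -> : phi p (upd a r (a r).+1) = phi p a; last by [].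
  apply/mnmP => i; rewrite !mnmE /upd; case: eqP => // E.
  by rewrite (val_inj E) hpr.
have -> : phi p (upd a r (a r).+1) = kplus (phi p a) r N.
  apply/mnmP => i; rewrite !mnmE /upd.
  case: (eqVneq i r) => [->|hne]; first by rewrite eqxx (ltnNge (p r)) hpr /=; lia.
  by rewrite (_ : (nat_of_ord i == nat_of_ord r) = false) //; apply/negbTE.
by apply: hmono; rewrite mnmE (ltnNge (p r)) hpr /=; lia.
Qed.

Lemma upd_upd (a : nat -> nat) r y z : upd (upd a r y) r z = upd a r z.
Proof. by apply: functional_extensionality => i; rewrite /upd; case: eqP. Qed.

Lemma upd_same (a : nat -> nat) r : upd a r (a r) = a.
Proof. exact: upd_id. Qed.

Lemma phi_coord p c (r : 'I_m) y t : h (phi p (upd c r (y + t))) <= h (phi p (upd c r y)).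
Proof.
elim: t => [|t IH]; first by rewrite addn0.
apply: leq_trans _ IH.
have := phi_step p (upd c r (y + t)) r.
by rewrite upd_upd {2}/upd eqxx addnS.
Qed.

Lemma phi_mono p : forall a b, (forall i, i < m -> a i <= b i) ->
  h (phi p b) <= h (phi p a).
Proof.
move=> a b hab.
pose c r := fun i => if i < r then b i else a i.
have hc r : r <= m -> h (phi p (c r)) <= h (phi p a).
  elim: r => [|r IH] hr.
    by have -> : c 0 = a by apply: functional_extensionality.
  apply: leq_trans (IH (ltnW hr)).
  have E1 : c r.+1 = upd (c r) r (b r).
    apply: functional_extensionality => i; rewrite /c /upd ltnS leq_eqVlt.
    by case: eqP => [->|]; rewrite ?ltnn.
  have E2 : c r = upd (c r) r (a r).
    by apply: functional_extensionality => i; rewrite /c /upd; case: eqP => [->|]; rewrite ?ltnn.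
  have := phi_coord p (c r) (Ordinal hr) (a r) (b r - a r).
  by rewrite /= subnKC ?hab // -E1 -E2.
have -> : phi p b = phi p (c m).
  by apply/mnmP => i; rewrite !mnmE /c ltn_ord.
exact: hc.
Qed.

Lemma phi_box p : exists L, forall a, h (phi p a) = h (phi p (mn a L)).
Proof. exact: box_fun (phi_mono p). Qed.


Lemma periodic : exists L, forall (k : 'X_{1..m}) j, L <= k j -> h (kplus k j N) = h k.
Proof.
have [Lf HL] := @fin_all_exists {ffun 'I_m -> 'I_(B + N)} (fun _ => nat)
  (fun p L => forall a, h (phi p a) = h (phi p (mn a L))) phi_box.
pose L := \max_(p : {ffun 'I_m -> 'I_(B + N)}) Lf p.
have HL' p a : h (phi p a) = h (phi p (mn a L)).
  rewrite (HL p a) (HL p (mn a L)); congr (h (phi p _)).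
  apply: functional_extensionality => i; rewrite /mn -minnA.
  by rewrite (minn_idPr (leq_bigmax p)).
exists (B + N * L.+1) => k j hk.
pose pat (i : 'I_m) := if k i < B then k i else B + (k i - B) %% N.
have pat_lt i : pat i < B + N.
  rewrite /pat; case: (ltnP (k i) B) => hi; first lia.
  have := ltn_pmod (k i - B) N_gt0; lia.
pose p := [ffun i => Ordinal (pat_lt i)].
pose a := fun i => nth 0 [seq (if k x < B then 0 else (k x - B) %/ N) | x <- enum 'I_m] i.
have ha (i : 'I_m) : a i = if k i < B then 0 else (k i - B) %/ N.
  by rewrite /a (nth_map i) ?size_enum_ord ?ltn_ord // nth_ord_enum.
have E1 : phi p a = k.
  apply/mnmP => i; rewrite mnmE ffunE /= /pat ha.
  case: (ltnP (k i) B) => hi /=; first by rewrite hi.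
  have := divn_eq (k i - B) N.
  rewrite (ltnNge (B + _)) leq_addr /=; lia.
have hjB : B <= k j by lia.
have hjB' : (k j < B) = false by rewrite ltnNge hjB.
have hBr r : (B + r < B) = false by rewrite ltnNge leq_addr.
have E2 : phi p (upd a j (a j).+1) = kplus k j N.
  apply/mnmP => i; rewrite !mnmE ffunE /= /pat /upd.
  case: (eqVneq i j) => [->|hne].
    rewrite eqxx ha hjB' /= hBr.
    have := divn_eq (k j - B) N; lia.
  rewrite (_ : (nat_of_ord i == nat_of_ord j) = false); last by apply/negbTE.
  rewrite ha; case: (ltnP (k i) B) => hi /=; first by rewrite hi.
  rewrite (ltnNge (B + _)) leq_addr /=.
  have := divn_eq (k i - B) N; lia.
have hajL : L <= a j.
  rewrite ha ltnNge hjB /=; apply: ltnW; rewrite leq_divRL //; lia.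
have E3 : mn (upd a j (a j).+1) L = mn a L.
  apply: functional_extensionality => i; rewrite /mn /upd.
  case: eqP => [->|//].
  by rewrite (minn_idPr hajL) (minn_idPr (leq_trans hajL (leqnSn _))).
by rewrite -E2 -E1 HL' E3 -HL'.
Qed.
End Period.

Import GRing.Theory.
Local Open Scope ring_scope.

Section Rat.
Variable m : nat.

Lemma mcoeff_fam (I : finType) (c : I -> rat) (e : I -> 'X_{1..m}) x :
  (\sum_i c i *: 'X_[e i] : {mpoly rat[m]})@_x = \sum_i c i * (e i == x)%:R.
Proof.
rewrite (big_morph (mcoeff x) (mcoeffD x) (mcoeff0 _ x)); apply: eq_bigr => i _.
by rewrite mcoeffZ mcoeffX.
Qed.

Lemma msupp_sum_fam (I : finType) (c : I -> rat) (e : I -> 'X_{1..m})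
    (f : 'X_{1..m} -> rat) : injective e ->
  \sum_(x <- msupp (\sum_i c i *: 'X_[e i] : {mpoly rat[m]}))
     (\sum_i c i *: 'X_[e i] : {mpoly rat[m]})@_x * f x = \sum_i c i * f (e i).
Proof.
move=> inj_e; set P := (\sum_i c i *: 'X_[e i] : {mpoly rat[m]}).
have cP i : P@_(e i) = c i.
  rewrite mcoeff_fam (bigD1 i) //= eqxx mulr1 big1 ?addr0 // => j hj.
  by rewrite (inj_eq inj_e) (negbTE hj) mulr0.
under eq_bigr => x _ do rewrite mcoeff_fam big_distrl /=.
rewrite exchange_big /=; apply: eq_bigr => i _.
case: (boolP (e i \in msupp P)) => hi.
  rewrite (bigD1_seq (e i)) ?msupp_uniq //= eqxx mulr1 big1 ?addr0 // => x hx.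
  by rewrite eq_sym (negbTE hx) mulr0 mul0r.
rewrite big1_seq; last first.
  move=> x /andP [_ hx]; case: eqP => [E|_]; last by rewrite mulr0 mul0r.
  by move: hi; rewrite E hx.
move: hi; rewrite mcoeff_msupp negbK cP => /eqP ->; by rewrite mul0r.
Qed.

Section Cert.
Variables (F : 'X_{1..m} -> rat) (N L : nat).
Hypothesis N_gt0 : (0 < N)%N.
Hypothesis hper : forall (k : 'X_{1..m}) j, (L <= k j)%N -> F (kplus k j N) = F k.

Definition eS (S : {set 'I_m}) : 'X_{1..m} := [multinom (if i \in S then N else 0%N) | i < m].

Lemma eS_inj : injective eS.
Proof.
move=> S S' H; apply/setP => i; have := congr1 (fun e : 'X_{1..m} => e i) H.
by rewrite /= !mnmE; case: (i \in S); case: (i \in S') => //= E; lia.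
Qed.

Definition cS (S : {set 'I_m}) : rat := (-1) ^+ #|S|.
Definition Qp : {mpoly rat[m]} := \sum_S cS S *: 'X_[eS S].
Definition Tk (k : 'X_{1..m}) S := cS S * (if (eS S <= k)%MM then F (k - eS S)%MM else 0).
Definition Lk k := \sum_S Tk k S.

Lemma Lk_eq k : \sum_(e <- msupp Qp | (e <= k)%MM) Qp@_e * F (k - e)%MM = Lk k.
Proof.
rewrite big_mkcond /=.
rewrite (eq_bigr (fun e => Qp@_e * (if (e <= k)%MM then F (k - e)%MM else 0))); last first.
  by move=> e _; case: ifP; rewrite ?mulr0.
exact: msupp_sum_fam eS_inj.
Qed.

Lemma Qp_neq0 : Qp != 0.
Proof.
apply/eqP => H; have := congr1 (mcoeff (eS set0)) H.
rewrite mcoeff0 /Qp mcoeff_fam (bigD1 set0) //= eqxx mulr1 big1 ?addr0.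
  by rewrite /cS cards0 expr0 => /eqP; rewrite oner_eq0.
by move=> S hS; rewrite (inj_eq eS_inj) (negbTE hS) mulr0.
Qed.

Lemma Tk_pair (k : 'X_{1..m}) j (S0 : {set 'I_m}) : (L + N <= k j)%N -> j \notin S0 ->
  Tk k (j |: S0) = - Tk k S0.
Proof.
move=> hk hj; rewrite /Tk /cS cardsU1 hj add1n exprS mulN1r -mulNr; congr (_ * _).
have Ei (i : 'I_m) : i != j -> (i \in j |: S0) = (i \in S0).
  by move=> hi; rewrite in_setU1 (negbTE hi).
have -> : (eS (j |: S0) <= k)%MM = (eS S0 <= k)%MM.
  apply/mnm_lepP/mnm_lepP => H i; have := H i; rewrite !mnmE.
    case: (eqVneq i j) => [->|hi]; first by rewrite (negbTE hj); lia.
    by rewrite Ei.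
  case: (eqVneq i j) => [->|hi]; first by rewrite setU11; lia.
  by rewrite Ei.
case: ifP => // _.
rewrite -(@hper (k - eS (j |: S0))%MM j); last by rewrite mnmBE !mnmE setU11; lia.
congr F; apply/mnmP => i; rewrite !mnmE ?mnmBE ?mnmE.
case: (eqVneq i j) => [->|hi]; first by rewrite setU11 (negbTE hj); lia.
by rewrite Ei.
Qed.

Lemma Lk_vanish (k : 'X_{1..m}) j : (L + N <= k j)%N -> Lk k = 0.
Proof.
move=> hk.
pose sg (S : {set 'I_m}) := if j \in S then S :\ j else j |: S.
have sgK : involutive sg.
  move=> S; rewrite /sg; case: (boolP (j \in S)) => hS.
    by rewrite setD11 setD1K.
  by rewrite setU11 setU1K.
have Hneg S : Tk k (sg S) = - Tk k S.
  rewrite /sg; case: (boolP (j \in S)) => hS.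
    have -> : S = j |: (S :\ j) by rewrite setD1K.
    by rewrite setU1K ?setD11 // Tk_pair ?setD11 // opprK.
  by rewrite Tk_pair.
have E : Lk k = - Lk k.
  rewrite {1}/Lk (reindex_inj (inv_inj sgK)) /= /Lk -sumrN.
  by apply: eq_bigr => S _; rewrite Hneg.
lra.
Qed.

Lemma cert : rational_series F.
Proof.
pose D := (m * (L + N)).+1.
pose P : {mpoly rat[m]} := \sum_(b : 'X_{1..m < D}) Lk b *: 'X_[b].
exists P, Qp; split; first exact: Qp_neq0.
move=> k; rewrite Lk_eq /P mcoeff_fam.
case: (ltnP (mdeg k) D) => hD.
  rewrite (bigD1 (BMultinom hD)) //= eqxx mulr1 big1 ?addr0 // => b hb.
  case: eqP => [E|]; last by rewrite mulr0.
  by move: hb; rewrite -(inj_eq val_inj) /= E eqxx.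
rewrite big1; last first.
  move=> b _; case: eqP => [E|]; last by rewrite mulr0.
  by have := bmdeg b; rewrite E ltnNge hD.
apply: NNPP => H.
have hj : exists j, (L + N <= k j)%N.
  apply: NNPP => H2.
  have Hs : (\sum_i k i <= \sum_(i < m) (L + N))%N.
    apply: leq_sum => i _; case: (leqP (L + N) (k i)) => hi; last exact: ltnW.
    by exfalso; apply: H2; exists i.
  move: Hs; rewrite sum_nat_const card_ord -mdegE => Hs.
  by have := leq_trans hD Hs; rewrite /D ltnn.
by case: hj => j hj; apply: H; rewrite (@Lk_vanish k j).
Qed.
End Cert.
End Rat.

Theorem theorem4p6 (gT : finGroupType) (G : {group gT}) (m : nat)
    (C : 'I_m -> {set gT})
    (hC : forall i, C i \in classes G)
    (hdisj : injective C)
    (hnt : forall i, C i != [set 1%g])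
    (hgen : forall i, <<C i>>%g = G) :
  rational_series (fun k => ((hcount G C k)%:R)%R).
Proof.
pose gsel := fun j => repr (C j).
have gsel_in j : gsel j \in C j.
  rewrite /gsel; have /imsetP [x hx ->] := hC j.
  by apply: (mem_repr x); apply: class_refl.
have N_gt0 : (0 < #|G|)%N by apply: cardG_gt0.
have hmono : forall (k : 'X_{1..m}) j, (#|G| * #|G| <= k j)%N ->
    (hcount G C (kplus k j #|G|) <= hcount G C k)%N.
  by move=> k j hk; apply: (@hcount_mono gT G m C hC hdisj gsel gsel_in).
have [L HL] := @periodic m (fun k => hcount G C k) #|G| (#|G| * #|G|) N_gt0 hmono.
apply: (@cert m (fun k => ((hcount G C k)%:R)%R) #|G| L N_gt0).
by move=> k j hj; rewrite (HL k j hj).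
Qed.
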